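(* Let $(\mathcal{A},\varphi)$ be a unital algebra with a linear functional $\varphi$, $\varphi(\mathbf 1)=1$. For all $n\in\mathbb{N}_+$, $k\in[n]$ and $a_1,\dots,a_{n+1}\in\mathcal{A}$, $$\kappa^*_{n+1}(a_1,\dots,a_{n+1})=\kappa^*_n(a_1,\dots,a_{k-1},a_ka_{k+1},a_{k+2},\dots,a_{n+1})-\kappa^*_k(a_1,\dots,a_k)\,\kappa^*_{n+1-k}(a_{k+1},\dots,a_{n+1}).$$ Moreover, if $\mathcal{A}=B(\mathcal H)$ for a Hilbert space $\mathcal H$ and $\varphi(a)=\langle a\xi,\xi\rangle$ for a unit vector $\xi$, then $\kappa^*_n(a_1,\dots,a_n)=\varphi(a_1P^\perp a_2P^\perp\cdots P^\perp a_n)$, where $P^\perp$ is the orthogonal projection onto $(\mathbb{C}\xi)^\perp$.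
   Context: The multilinear functionals $\kappa^*_n$ are defined recursively by $\kappa^*_1(a)=\varphi(a)$ and $\kappa^*_{n+1}(a_1,\dots,a_{n+1})=\kappa^*_n(a_1a_2,a_3,\dots,a_{n+1})-\varphi(a_1)\kappa^*_n(a_2,\dots,a_{n+1})$. *)

(* Defs.v *)
From HB Require Import structures.
From mathcomp Require Import all_boot all_order all_algebra.
Set Implicit Arguments. Unset Strict Implicit. Unset Printing Implicit Defensive.
Import Order.TTheory GRing.Theory Num.Theory.
Local Open Scope ring_scope.

(* kappa* for a multiplication [mul] on a carrier A and a
   functional [phi : A -> F].  kst m s is kappa*_m on the list s (m = size s). *)
Section KappaStar.
Variables (F : pzRingType) (A : Type) (mul : A -> A -> A) (phi : A -> F).

Fixpoint kst (m : nat) (s : seq A) : F :=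
  match m with
  | 0 => 0
  | m'.+1 =>
    match s with
    | [::] => 0
    | [:: a] => phi a
    | a1 :: ((a2 :: t) as s') => kst m' (mul a1 a2 :: t) - phi a1 * kst m' s'
    end
  end.

Definition kappa (s : seq A) : F := kst (size s) s.

Fixpoint alt_prod (p : A) (s : seq A) (dflt : A) : A :=
  match s with
  | [::] => dflt
  | [:: a] => a
  | a :: t => mul a (mul p (alt_prod p t dflt))
  end.
End KappaStar.

(* Main.v *)
Require Import Defs.
From HB Require Import structures.
From mathcomp Require Import all_boot all_order all_algebra.
From mathcomp Require Import ring.
Import Order.TTheory GRing.Theory Num.Theory.
Local Open Scope ring_scope.

Section P1.
Variables (F : fieldType) (A : lalgType F) (phi : A -> F).

Lemma kap2 (a b : A) t :
  kappa *%R phi (a :: b :: t) = kappa *%R phi (a * b :: t) - phi a * kappa *%R phi (b :: t).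
Proof. by []. Qed.

Lemma kap1 (a : A) : kappa *%R phi [:: a] = phi a.
Proof. by []. Qed.

Lemma alg_id (x y z w u p : F) :
  x - y * z - p * (w - u * z) = (x - p * w) - (y - p * u) * z.
Proof. ring. Qed.

Lemma part1 k : forall s : seq A, (0 < k)%N -> (k < size s)%N ->
  kappa *%R phi s =
    kappa *%R phi (take k.-1 s ++ (nth 0 s k.-1 * nth 0 s k) :: drop k.+1 s)
    - kappa *%R phi (take k s) * kappa *%R phi (drop k s).
Proof.
elim: k => [//|k IH] [|a [|b t]] //= _ Hs.
case: k IH Hs => [|k] IH Hs.
  by rewrite kap2 drop0 kap1.
have H1 := IH (a * b :: t) isT Hs.
have H2 := IH (b :: t) isT Hs.
rewrite kap2 H1 H2 /=.
case: k {IH H1 H2} Hs => [|j] Hs /=.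
  rewrite (kap2 a b (take 0 t)) (kap2 a (b * _)) ?mulrA !drop0 /=.
  exact: alg_id.
rewrite (kap2 a b (take j t ++ _)) (kap2 a b (take j.+1 t)).
exact: alg_id.
Qed.
End P1.

Lemma kapG (F : pzRingType) (A : Type) (mul : A -> A -> A) (phi : A -> F) a b t :
  kappa mul phi (a :: b :: t) = kappa mul phi (mul a b :: t) - phi a * kappa mul phi (b :: t).
Proof. by []. Qed.

Section P2.
Variables (C : numClosedFieldType) (V : lmodType C) (ip : V -> V -> C).
Hypothesis iplin : forall (c : C) (u v w : V), ip (c *: u + v) w = c * ip u w + ip v w.
Variable xi : V.
Definition lin (a : V -> V) := forall (c : C) (u v : V), a (c *: u + v) = c *: a u + a v.

Lemma step (a X : V -> V) : lin a ->
  ip (a (X xi)) xi - ip (a xi) xi * ip (X xi) xi =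
  ip (a (X xi - ip (X xi) xi *: xi)) xi.
Proof.
move=> La.
rewrite [X xi - _]addrC -scaleNr La iplin mulNr addrC mulrC.
by [].
Qed.

Lemma part2 n : forall s : seq (V -> V), size s = n.+1 ->
  (forall i, (i < size s)%N -> lin (nth id s i)) ->
  kappa (fun a b => a \o b) (fun a : V -> V => ip (a xi) xi) s =
  (fun a : V -> V => ip (a xi) xi)
    (alt_prod (fun a b => a \o b) (fun v : V => v - ip v xi *: xi) s id).
Proof.
elim: n => [|n IH] [|a [|b t]] //= Hs Hl.
have La : lin a by apply: (Hl 0%N).
have Lb : lin b by apply: (Hl 1%N).
rewrite kapG IH /=; last 2 first.
- by case: Hs => ->.
- case=> [|i] /= Hi; last by apply: (Hl i.+2).
  by move=> c u v; rewrite /= Lb La.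
rewrite IH /=; last 2 first.
- by case: Hs => ->.
- by move=> i Hi; apply: (Hl i.+1).
case: t {Hs Hl IH} => [|c t] /=.
  exact: (step a b La).
exact: (step a (b \o ((fun v : V => v - ip v xi *: xi) \o alt_prod (fun a b => a \o b) (fun v : V => v - ip v xi *: xi) (c :: t) id)) La).
Qed.
End P2.

Theorem mainTheorem10 :
  (* Part 1: unital algebra A over a field F, linear phi with phi 1 = 1 *)
  (forall (F : fieldType) (A : lalgType F) (phi : A -> F),
     (forall (c : F) (x y : A), phi (c *: x + y) = c * phi x + phi y) ->
     phi 1 = 1 ->
     forall (n k : nat) (s : seq A),
       size s = n.+1 -> (0 < n)%N -> (0 < k <= n)%N ->
       kappa *%R phi s =
         kappa *%R phi (take k.-1 s ++ (nth 0 s k.-1 * nth 0 s k) :: drop k.+1 s)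
         - kappa *%R phi (take k s) * kappa *%R phi (drop k s))
  /\
  (* Part 2: operators on a complex inner product space, phi(a) = <a xi, xi> *)
  (forall (C : numClosedFieldType) (V : lmodType C) (ip : V -> V -> C),
     (forall (c : C) (u v w : V), ip (c *: u + v) w = c * ip u w + ip v w) ->
     (forall u v : V, ip u v = (ip v u)^*) ->
     (forall v : V, v != 0 -> 0 < ip v v) ->
     forall xi : V, ip xi xi = 1 ->
     let phi := fun a : V -> V => ip (a xi) xi in
     let Pperp := fun v : V => v - ip v xi *: xi in
     forall s : seq (V -> V),
       (0 < size s)%N ->
       (forall i, (i < size s)%N -> forall (c : C) (u v : V),
          nth id s i (c *: u + v) = c *: nth id s i u + nth id s i v) ->
       kappa (fun a b => a \o b) phi s = phi (alt_prod (fun a b => a \o b) Pperp s id)).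
Proof.
split.
  move=> F A phi _ _ n k s Hs Hn /andP[Hk Hkn].
  apply: part1 => //; by rewrite Hs ltnS.
move=> C V ip iplin _ _ xi _ phi Pperp s Hs Hl.
case: s Hs Hl => [//|a s] _ Hl.
exact: (@part2 C V ip iplin xi (size s) (a :: s) erefl Hl).
Qed.
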